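(* Let $k\ge2$, $n\ge1$ be integers, let $\bar{\mathcal{P}}\in\mathbb{R}^{[k,n]}$ be a columnwise-substochastic tensor, $\mathbf{v}\in\mathbb{R}^n$ a stochastic vector and $\alpha\in[0,1)$. Define $\mathcal{P}\in\mathbb{R}^{[k,n]}$ by $p_{ii_2\dots i_k}:=\bar p_{ii_2\dots i_k}+v_i\left(1-\sum_{\ell=1}^n\bar p_{\ell i_2\dots i_k}\right)$. Then the MPR problem $$\mathbf{x}=\alpha\mathcal{P}\mathbf{x}^{k-1}+(1-\alpha)\mathbf{v},\quad\mathbf{x}\in\mathbb{R}^n_+,\quad\mathbf{e}^T\mathbf{x}=1$$ has a unique solution if and only if the MLPPR system $(\mathbf{e}^T\mathbf{y})^{k-2}\mathbf{y}-\alpha\bar{\mathcal{P}}\mathbf{y}^{k-1}=\mathbf{v}$ has a unique nonnegative solution $\mathbf{y}\in\mathbb{R}^n_+$.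
   Context: For $\mathcal{P}\in\mathbb{R}^{[k,n]}$ (real tensors of order $k$, dimension $n$) and $\mathbf{y}\in\mathbb{R}^n$, $(\mathcal{P}\mathbf{y}^{k-1})_i=\sum_{i_2,\dots,i_k}p_{i i_2\dots i_k}y_{i_2}\cdots y_{i_k}$. $\bar{\mathcal{P}}$ is columnwise-substochastic if its entries are nonnegative and $\sum_{i}\bar p_{i i_2\dots i_k}\le1$ for all $i_2,\dots,i_k$. $\mathbf{e}$ is the all-ones vector; a stochastic vector is nonnegative with entries summing to $1$. *)

(* Defs.v *)
From HB Require Import structures.
From mathcomp Require Import all_boot all_order all_algebra.
From mathcomp Require Import reals.
Set Implicit Arguments. Unset Strict Implicit. Unset Printing Implicit Defensive.
Import Order.TTheory GRing.Theory Num.Theory.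
Local Open Scope ring_scope.

(* A tensor of order k and dimension n: entry p_{i i_2 ... i_k} is
   [P i j] where [j : midx k n] encodes the trailing k-1 indices
   (i_2,...,i_k) as a function 'I_(k-1) -> 'I_n. *)
Definition midx (k n : nat) := {ffun 'I_k.-1 -> 'I_n}.
Definition tensor (R : Type) (k n : nat) := 'I_n -> midx k n -> R.

Definition tapply (R : realType) (k n : nat) (P : tensor R k n)
  (y : {ffun 'I_n -> R}) (i : 'I_n) : R :=
  \sum_(j : midx k n) P i j * \prod_(m < k.-1) y (j m).

Definition col_substochastic (R : realType) (k n : nat) (Pb : tensor R k n) :=
  (forall i j, 0 <= Pb i j) /\ (forall j, \sum_(i < n) Pb i j <= 1).

Definition stochastic (R : realType) (n : nat) (v : {ffun 'I_n -> R}) :=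
  (forall i, 0 <= v i) /\ \sum_(i < n) v i = 1.

Definition PR_tensor (R : realType) (k n : nat) (Pb : tensor R k n)
  (v : {ffun 'I_n -> R}) : tensor R k n :=
  fun i j => Pb i j + v i * (1 - \sum_(l < n) Pb l j).

Definition MPR_solution (R : realType) (k n : nat) (alpha : R) (P : tensor R k n)
  (v x : {ffun 'I_n -> R}) : Prop :=
  (forall i, x i = alpha * tapply P x i + (1 - alpha) * v i) /\
  (forall i, 0 <= x i) /\ \sum_(i < n) x i = 1.

Definition MLPPR_solution (R : realType) (k n : nat) (alpha : R) (Pb : tensor R k n)
  (v y : {ffun 'I_n -> R}) : Prop :=
  (forall i, (\sum_(l < n) y l) ^+ (k - 2) * y i - alpha * tapply Pb y i = v i) /\
  (forall i, 0 <= y i).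

(* Main.v *)
Require Import Defs.
From HB Require Import structures.
From mathcomp Require Import all_boot all_order all_algebra.
From mathcomp Require Import reals.
From mathcomp Require Import ring.
Import Order.TTheory GRing.Theory Num.Theory.
Local Open Scope ring_scope.

Lemma root_ex {R : realType} {d : nat} (a : R) : (0 < d)%N -> 0 < a ->
  exists r : R, 0 < r /\ r ^+ d = a.
Proof.
move=> hd ha.
have p0 : ('X^d - a%:P : {poly R}).[0] = - a.
  by rewrite !hornerE expr0n eqn0Ngt hd /= sub0r.
have p1 : 0 <= ('X^d - a%:P : {poly R}).[1 + a].
  rewrite !hornerE subr_ge0.
  apply: le_trans (_ : 1 + a <= _); first by rewrite lerDr ler01.
  apply: ler_eXnr => //.
  by rewrite lerDl ltW.
have [r /andP[] hr0 _ hroot] : exists2 x, 0 <= x <= 1 + a & root ('X^d - a%:P) x.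
  apply: poly_ivt; first by rewrite addr_ge0 ?ler01 ?ltW.
  by rewrite p0 oppr_le0 ltW.
move/rootP: hroot; rewrite !hornerE => /eqP; rewrite subr_eq0 => /eqP hr.
exists r; split => //; rewrite lt_neqAle hr0 andbT.
apply/eqP => r0; move: hr; rewrite -r0 expr0n eqn0Ngt hd /= => a0.
by move: ha; rewrite -a0 ltxx.
Qed.

Definition Tsum {R : realType} {k n : nat} (P : tensor R k n) (y : {ffun 'I_n -> R}) : R :=
  \sum_(l < n) tapply P y l.

Lemma prod_sum {R : realType} {k n : nat} (y : {ffun 'I_n -> R}) :
  \sum_(j : midx k n) \prod_(m < k.-1) y (j m) = (\sum_(l < n) y l) ^+ k.-1.
Proof.
rewrite /midx -(bigA_distr_bigA (fun (m : 'I_k.-1) (l : 'I_n) => y l)).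
by rewrite prodr_const card_ord.
Qed.

Lemma Tsum_swap {R : realType} {k n : nat} (P : tensor R k n) (y : {ffun 'I_n -> R}) :
  Tsum P y = \sum_(j : midx k n) (\sum_(l < n) P l j) * \prod_(m < k.-1) y (j m).
Proof.
rewrite /Tsum /tapply exchange_big /=; apply: eq_bigr => j _.
by rewrite mulr_suml.
Qed.

Lemma tapply_PR {R : realType} {k n : nat} (Pb : tensor R k n) (v x : {ffun 'I_n -> R}) i :
  tapply (PR_tensor Pb v) x i =
  tapply Pb x i + v i * ((\sum_(l < n) x l) ^+ k.-1 - Tsum Pb x).
Proof.
rewrite /tapply /PR_tensor -prod_sum Tsum_swap.
under eq_bigr do rewrite mulrDl.
rewrite big_split /=; congr (_ + _).
rewrite -sumrB mulr_sumr; apply: eq_bigr => j _.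
by rewrite -mulrA mulrBl mul1r.
Qed.

Lemma Tsum_bounds {R : realType} {k n : nat} (Pb : tensor R k n) (y : {ffun 'I_n -> R}) :
  col_substochastic Pb -> (forall i, 0 <= y i) ->
  0 <= Tsum Pb y <= (\sum_(l < n) y l) ^+ k.-1.
Proof.
move=> [h0 h1] hy; rewrite Tsum_swap -prod_sum; apply/andP; split.
  by apply: sumr_ge0 => j _; apply: mulr_ge0; [apply: sumr_ge0|apply: prodr_ge0].
apply: ler_sum => j _; rewrite -[X in _ <= X]mul1r; apply: ler_wpM2r => //.
by apply: prodr_ge0.
Qed.

Lemma tapply_scale {R : realType} {k n : nat} (P : tensor R k n) (y : {ffun 'I_n -> R}) t i :
  tapply P [ffun l => t * y l] i = t ^+ k.-1 * tapply P y i.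
Proof.
rewrite /tapply mulr_sumr; apply: eq_bigr => j _.
under eq_bigr do rewrite ffunE.
by rewrite big_split /= prodr_const card_ord mulrCA.
Qed.

Lemma sum_scale {R : realType} {n : nat} (y : {ffun 'I_n -> R}) t :
  \sum_(l < n) [ffun l => t * y l] l = t * \sum_(l < n) y l.
Proof. by rewrite mulr_sumr; apply: eq_bigr => l _; rewrite ffunE. Qed.

Lemma exp_km2 {R : realType} {k : nat} (s : R) : (2 <= k)%N ->
  s ^+ (k - 2) * s = s ^+ k.-1.
Proof. by case: k => [|[|k]] //= _; rewrite -exprSr subn2. Qed.

Lemma Tsum_scale {R : realType} {k n : nat} (P : tensor R k n) (y : {ffun 'I_n -> R}) t :
  Tsum P [ffun l => t * y l] = t ^+ k.-1 * Tsum P y.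
Proof. by rewrite /Tsum mulr_sumr; apply: eq_bigr => i _; rewrite tapply_scale. Qed.

Lemma L0 {R : realType} {k n : nat} (hk : (2 <= k)%N) {Pb : tensor R k n}
  {v : {ffun 'I_n -> R}} {alpha : R} (hv : stochastic v) {y} :
  MLPPR_solution alpha Pb v y ->
  (\sum_(l < n) y l) ^+ k.-1 - alpha * Tsum Pb y = 1.
Proof.
move=> [hy _]; case: hv => _ <-.
rewrite -(eq_bigr _ (fun i _ => hy i)) sumrB -mulr_sumr -mulr_sumr exp_km2 //.
Qed.

Lemma L2 {R : realType} {k n : nat} (hk : (2 <= k)%N) {Pb : tensor R k n}
  {v : {ffun 'I_n -> R}} {alpha : R} (hPb : col_substochastic Pb) (hv : stochastic v)
  (ha0 : 0 <= alpha) {y} :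
  MLPPR_solution alpha Pb v y ->
  0 < \sum_(l < n) y l /\
  MPR_solution alpha (PR_tensor Pb v) v [ffun l => (\sum_(l < n) y l)^-1 * y l].
Proof.
move=> hs; have h0 := L0 hk hv hs; case: (hs) => hy hyp.
set s := \sum_(l < n) y l in h0 *.
have s0 : 0 <= s by apply: sumr_ge0.
have hT := Tsum_bounds Pb y hPb hyp; case/andP: hT => T0 _.
have sp : 0 < s.
  rewrite lt_neqAle s0 andbT; apply/eqP => s0'.
  have hd : (0 < k.-1)%N by case: (k) hk => [|[|]].
  move: h0; rewrite -s0' expr0n eqn0Ngt hd /= => h0.
  have hn : alpha * Tsum Pb y = -1 by rewrite -h0 sub0r opprK.
  by have := mulr_ge0 ha0 T0; rewrite hn ler0N1.
split => //; split; last split.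
- move=> i; rewrite tapply_PR sum_scale -/s mulVf ?gt_eqF // expr1n.
  rewrite Tsum_scale tapply_scale ffunE.
  have -> : alpha * ((s^-1) ^+ k.-1 * tapply Pb y i +
     v i * (1 - (s^-1) ^+ k.-1 * Tsum Pb y)) + (1 - alpha) * v i =
     alpha * ((s^-1) ^+ k.-1 * tapply Pb y i) + v i * (1 - (s^-1) ^+ k.-1 * (alpha * Tsum Pb y))
    by ring.
  have -> : alpha * Tsum Pb y = s ^+ (k - 2) * s - 1 by rewrite exp_km2 // -h0; ring.
  have -> : v i = s ^+ (k - 2) * y i - alpha * tapply Pb y i by rewrite -(hy i).
  rewrite exprVn -exp_km2 //.
  have D0 : s ^+ (k - 2) != 0 by rewrite expf_neq0 // gt_eqF.
  field; by rewrite D0 gt_eqF.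
- by move=> i; rewrite ffunE mulr_ge0 // invr_ge0.
- by rewrite sum_scale mulVf // gt_eqF.
Qed.

Lemma L1 {R : realType} {k n : nat} (hk : (2 <= k)%N) {Pb : tensor R k n}
  {v : {ffun 'I_n -> R}} {alpha : R} (hPb : col_substochastic Pb)
  (ha0 : 0 <= alpha) (ha1 : alpha < 1) {x} :
  MPR_solution alpha (PR_tensor Pb v) v x ->
  exists r : R, 0 < r /\ MLPPR_solution alpha Pb v [ffun l => r * x l].
Proof.
move=> [hx [hxp hs]].
have hd : (0 < k.-1)%N by case: (k) hk => [|[|]].
have /andP[T0 T1] := Tsum_bounds Pb x hPb hxp.
move: T1; rewrite hs expr1n => T1.
have cp : 0 < 1 - alpha * Tsum Pb x.
  rewrite subr_gt0; apply: le_lt_trans ha1.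
  by rewrite -[X in _ <= X]mulr1 ler_wpM2l.
have ip : 0 < (1 - alpha * Tsum Pb x)^-1 by rewrite invr_gt0.
have [r [rp hr]] := root_ex _ hd ip.
exists r; split => //; split; last by move=> i; rewrite ffunE mulr_ge0 // ltW.
move=> i; rewrite sum_scale hs mulr1 ffunE mulrA exp_km2 // tapply_scale.
rewrite {1}(hx i) tapply_PR hs expr1n hr.
field; by rewrite gt_eqF.
Qed.

Lemma L3 {R : realType} {k n : nat} (hk : (2 <= k)%N) {Pb : tensor R k n}
  {v : {ffun 'I_n -> R}} {alpha : R} (hv : stochastic v) (x : {ffun 'I_n -> R}) (a b : R) :
  0 < a -> 0 < b -> \sum_(l < n) x l = 1 ->
  MLPPR_solution alpha Pb v [ffun l => a * x l] ->
  MLPPR_solution alpha Pb v [ffun l => b * x l] -> a = b.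
Proof.
move=> ap bp hs ha hb.
have hd : (0 < k.-1)%N by case: (k) hk => [|[|]].
have := L0 hk hv ha; have := L0 hk hv hb.
rewrite !sum_scale !Tsum_scale hs !mulr1 => eb ea.
have ea' : a ^+ k.-1 * (1 - alpha * Tsum Pb x) = 1 by rewrite mulrBr mulr1 mulrCA ea.
have eb' : b ^+ k.-1 * (1 - alpha * Tsum Pb x) = 1 by rewrite mulrBr mulr1 mulrCA eb.
have c0 : 1 - alpha * Tsum Pb x != 0.
  by apply/eqP => c0; move: ea'; rewrite c0 mulr0 => /eqP; rewrite eq_sym oner_eq0.
have e := mulIf c0 (etrans ea' (esym eb')).
by move/eqP: e; rewrite eqrXn2 ?ltW // => /eqP.
Qed.

Theorem theorem3p15 (R : realType) (k n : nat) (hk : (2 <= k)%N) (hn : (1 <= n)%N)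
  (Pb : tensor R k n) (v : {ffun 'I_n -> R}) (alpha : R)
  (hPb : col_substochastic Pb) (hv : stochastic v)
  (ha0 : 0 <= alpha) (ha1 : alpha < 1) :
  (exists! x : {ffun 'I_n -> R}, MPR_solution alpha (PR_tensor Pb v) v x) <->
  (exists! y : {ffun 'I_n -> R}, MLPPR_solution alpha Pb v y).
Proof.
split.
- move=> [x0 [hx0 hu]].
  have [r [rp hy0]] := L1 hk hPb ha0 ha1 hx0.
  exists [ffun l => r * x0 l]; split => // y' hy'.
  have [sp hx'] := L2 hk hPb hv ha0 hy'.
  have e := hu _ hx'.
  set s := \sum_(l < n) y' l in sp e hx'; clearbody s.
  have ey : y' = [ffun l => s * x0 l].
    apply/ffunP => l; rewrite e !ffunE mulrA mulfV ?mul1r //.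
    by rewrite gt_eqF.
  have hs : \sum_(l < n) x0 l = 1 by case: hx0 => _ [].
  rewrite ey in hy' *.
  by rewrite (L3 hk hv x0 r s rp sp hs hy0 hy').
- move=> [y0 [hy0 hu]].
  have [sp hx0] := L2 hk hPb hv ha0 hy0.
  exists [ffun l => (\sum_(l < n) y0 l)^-1 * y0 l]; split => // x' hx'.
  have [r [rp hy']] := L1 hk hPb ha0 ha1 hx'.
  have e := hu _ hy'.
  have hs : \sum_(l < n) x' l = 1 by case: hx' => _ [].
  have sr : \sum_(l < n) y0 l = r by rewrite e sum_scale hs mulr1.
  apply/ffunP => l; rewrite !ffunE sr e ffunE mulrA mulVf ?mul1r //.
  by rewrite gt_eqF.
Qed.
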